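(* Let $\Lambda$ be a net of quadrics in $\mathbb{P}^5$ which is stable with respect to every one-parameter subgroup of each of the numerical types $\rho_1=(1,1,1,1,1,-5)$, $\rho_2=(1,1,1,1,-2,-2)$, $\rho_3=(1,1,1,-1,-1,-1)$, $\rho_4=(2,2,-1,-1,-1,-1)$, $\rho_5=(5,-1,-1,-1,-1,-1)$. Let $\{x_0,\dots,x_5\}$ be any basis of $V$ and let $(Q_1,Q_2,Q_3)$ be a normalized basis of $\Lambda$ with respect to it. Then: (1) $Q_1,Q_2,Q_3\notin(x_5)$; (2) $(Q_2,Q_3)\not\subseteq(x_4,x_5)$ and $Q_3\notin(x_4,x_5)^2$; (3) $(Q_1,Q_2,Q_3)\not\subseteq(x_3,x_4,x_5)$, and either $(Q_2,Q_3)\not\subseteq(x_3,x_4,x_5)$ or $Q_3\notin(x_3,x_4,x_5)^2$; (4) $(Q_2,Q_3)\not\subseteq(x_2,x_3,x_4,x_5)^2$, and either $(Q_1,Q_2,Q_3)\not\subseteq(x_2,x_3,x_4,x_5)$ or $Q_3\notin(x_2,x_3,x_4,x_5)^2$; (5) $(Q_1,Q_2,Q_3)\not\subseteq(x_1,x_2,x_3,x_4,x_5)$ or $(Q_2,Q_3)\not\subseteq(x_1,x_2,x_3,x_4,x_5)^2$.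
   Context: $V=H^0(\mathbb{P}^5,\mathcal{O}(1))$, $W=H^0(\mathbb{P}^5,\mathcal{O}(2))$; a net of quadrics is a $3$-dimensional subspace $\Lambda\subset W$, a point of $Gr(3,W)\subset\mathbb{P}(\bigwedge^3W)$ with $SL(6)$-action. A 1-PS of numerical type $(a_0,\dots,a_5)$ ($a_0\ge\dots\ge a_5$, $\sum a_k=0$) acts diagonally on some basis $x_0,\dots,x_5$ of $V$ with these weights; weight of $x_ix_j$ is $a_i+a_j$, weight of a Plücker coordinate $x_{i_1}x_{j_1}\wedge x_{i_2}x_{j_2}\wedge x_{i_3}x_{j_3}$ is the sum of the three monomial weights. $\Lambda$ is stable with respect to $\rho$ if some Plücker coordinate not vanishing on $\Lambda$ has positive $\rho$-weight. Given the basis $x_0,\dots,x_5$, order quadratic monomials lexicographically ($x_0^2\succ x_0x_1\succ\cdots$), and let $in_{lex}(Q)$ be the lexicographically largest monomial of $Q$; a normalized basis of $\Lambda$ is a basis $(Q_1,Q_2,Q_3)$ with $in_{lex}(Q_1)\succ_{lex}in_{lex}(Q_2)\succ_{lex}in_{lex}(Q_3)$. For an ideal $I$, $(Q_2,Q_3)\subseteq I$ means $Q_2,Q_3\in I$. *)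

(* Defs.v *)
From HB Require Import structures.
From mathcomp Require Import all_boot all_order all_algebra.
From mathcomp Require Import mpoly.
Set Implicit Arguments. Unset Strict Implicit. Unset Printing Implicit Defensive.
Import Order.TTheory GRing.Theory Num.Theory.
Local Open Scope ring_scope.

(* Polynomial ring k[x_0,...,x_5]; 'X_i is the variable x_i (the standard basis of V). *)
Notation poly6 F := {mpoly F[6]}.

Definition is_quadric (F : fieldType) (q : poly6 F) : Prop :=
  forall m, m \in msupp q -> mdeg m = 2%N.

Definition in_span3 (F : fieldType) (P : 'I_3 -> poly6 F) (q : poly6 F) : Prop :=
  exists c : 'I_3 -> F, q = \sum_(i < 3) c i *: P i.

Definition lin_indep3 (F : fieldType) (P : 'I_3 -> poly6 F) : Prop :=
  forall c : 'I_3 -> F, \sum_(i < 3) c i *: P i = 0 -> forall i, c i = 0.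

Definition net_basis (F : fieldType) (P : 'I_3 -> poly6 F) : Prop :=
  (forall i, is_quadric (P i)) /\ lin_indep3 P.

Definition same_net (F : fieldType) (P Q : 'I_3 -> poly6 F) : Prop :=
  (forall i, in_span3 P (Q i)) /\ (forall i, in_span3 Q (P i)).

(* For an invertible matrix h, the substitution
   x_j := \sum_i h j i * y_i  expresses a polynomial Q(x) in terms of the new
   basis y_0..y_5 of V (where y = h^{-1} x); the new coordinates are again
   denoted 'X_0..'X_5.  As h ranges over invertible matrices, y ranges over all
   bases of V. *)
Definition lin_subst (F : fieldType) (h : 'M[F]_6) : 6.-tuple (poly6 F) :=
  [tuple \sum_(i < 6) h j i *: 'X_i | j < 6].

Definition in_basis (F : fieldType) (h : 'M[F]_6) (q : poly6 F) : poly6 F :=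
  q \mPo lin_subst h.

Definition mweight (a : 'I_6 -> int) (m : 'X_{1..6}) : int :=
  \sum_(i < 6) (m i)%:Z * a i.

(* Plucker coordinate x_{m0} /\ x_{m1} /\ x_{m2} of the net with basis q. *)
Definition plucker (F : fieldType) (q : 'I_3 -> poly6 F) (m : 'I_3 -> 'X_{1..6}) : F :=
  \det (\matrix_(i < 3, j < 3) (q i)@_(m j)).

(* Lambda (basis q in current coordinates) is stable wrt the 1-PS acting
   diagonally with weights a on the current basis. *)
Definition stable_wrt (F : fieldType) (a : 'I_6 -> int) (q : 'I_3 -> poly6 F) : Prop :=
  exists m : 'I_3 -> 'X_{1..6},
    (forall j, mdeg (m j) = 2%N) /\ plucker q m != 0 /\ 0 < \sum_(j < 3) mweight a (m j).

(* Stable wrt every 1-PS of numerical type a (i.e. acting diagonally with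
   weights a on some basis of V). *)
Definition stable_type (F : fieldType) (a : 'I_6 -> int) (P : 'I_3 -> poly6 F) : Prop :=
  forall h : 'M[F]_6, h \in unitmx -> stable_wrt a (fun i => in_basis h (P i)).

Definition wt6 (a0 a1 a2 a3 a4 a5 : int) : 'I_6 -> int :=
  fun i => nth 0 [:: a0; a1; a2; a3; a4; a5] i.

Definition rho1 := wt6 1 1 1 1 1 (-5).
Definition rho2 := wt6 1 1 1 1 (-2) (-2).
Definition rho3 := wt6 1 1 1 (-1) (-1) (-1).
Definition rho4 := wt6 2 2 (-1) (-1) (-1) (-1).
Definition rho5 := wt6 5 (-1) (-1) (-1) (-1) (-1).

Definition lex_gt (m1 m2 : 'X_{1..6}) : Prop :=
  exists i : 'I_6, (forall j : 'I_6, (j < i)%N -> m1 j = m2 j) /\ (m2 i < m1 i)%N.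

Definition is_in_lex (F : fieldType) (q : poly6 F) (m : 'X_{1..6}) : Prop :=
  m \in msupp q /\ forall m', m' \in msupp q -> m' != m -> lex_gt m m'.

Definition normalized_basis (F : fieldType) (h : 'M[F]_6) (P Q : 'I_3 -> poly6 F) : Prop :=
  same_net P Q /\
  exists m : 'I_3 -> 'X_{1..6},
    (forall i, is_in_lex (in_basis h (Q i)) (m i)) /\
    lex_gt (m 0) (m 1) /\ lex_gt (m 1) (m 2).

Definition in_ideal (F : fieldType) (gens : seq (poly6 F)) (q : poly6 F) : Prop :=
  exists c : 'I_(size gens) -> poly6 F, q = \sum_(i < size gens) c i * gens`_i.

Definition idx_from (k : nat) : seq 'I_6 := [seq i <- enum 'I_6 | (k <= nat_of_ord i)%N].

Definition gens_lin (F : fieldType) (k : nat) : seq (poly6 F) :=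
  [seq 'X_i | i <- idx_from k].
Definition gens_sq (F : fieldType) (k : nat) : seq (poly6 F) :=
  [seq 'X_i * 'X_j | i <- idx_from k, j <- idx_from k].

(* Main.v *)
Require Import Defs.
From HB Require Import structures.
From mathcomp Require Import all_boot all_order all_algebra.
From mathcomp Require Import mpoly.
From mathcomp Require Import fingroup perm zify.
From Stdlib Require Classical_Prop.
Import Order.TTheory GRing.Theory Num.Theory.
Local Open Scope ring_scope.


Definition tsum (k : nat) (m : 'X_{1..6}) : nat := (\sum_(i < 6 | (k <= i)%N) m i)%N.

Lemma tsumD k m1 m2 : tsum k (m1 + m2)%MM = (tsum k m1 + tsum k m2)%N.
Proof. by rewrite /tsum -big_split /=; apply: eq_bigr => i _; rewrite mnmDE. Qed.

Section Id.
Variable F : fieldType.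

Lemma ideal_gen (gens : seq (poly6 F)) l k q :
  (forall g, g \in gens -> exists u, g = 'X_[u] /\ (l <= tsum k u)%N) ->
  in_ideal gens q -> forall m, m \in msupp q -> (l <= tsum k m)%N.
Proof.
move=> Hg [c ->] m; rewrite mcoeff_msupp; apply: contraR; rewrite -ltnNge => lt.
rewrite raddf_sum /=; apply/eqP; apply: big1 => i _.
have [u [gE lu]] := Hg _ (mem_nth 0 (ltn_ord i)).
rewrite gE; apply/eqP; apply: contraTT lt; rewrite -mcoeff_msupp.
rewrite (perm_mem (msuppMX _ _)) => /mapP [m' _ ->].
by rewrite -leqNgt tsumD; apply: leq_trans lu (leq_addr _ _).
Qed.

Lemma tsumU k (i : 'I_6) : (k <= i)%N -> tsum k U_(i)%MM = 1%N.
Proof.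
move=> ki; rewrite /tsum (bigD1 i) //= mnm1E eqxx big1 // => j /andP [_ ne].
by rewrite mnm1E eq_sym (negbTE ne).
Qed.

Lemma ideal_lin k q : in_ideal (gens_lin F k) q -> forall m, m \in msupp q -> (1 <= tsum k m)%N.
Proof.
apply: ideal_gen => g /mapP [i]; rewrite mem_filter => /andP [ki _] ->.
by exists U_(i)%MM; rewrite tsumU.
Qed.

Lemma ideal_sq k q : in_ideal (gens_sq F k) q -> forall m, m \in msupp q -> (2 <= tsum k m)%N.
Proof.
apply: ideal_gen => g /allpairsP [[i j]] /=; rewrite !mem_filter => [[/andP [ki _] /andP [kj _] ->]].
by exists (U_(i) + U_(j))%MM; rewrite mpolyXD tsumD !tsumU.
Qed.
End Id.




Lemma tsumE k m : tsum k m = (\sum_(i<6) (if (k <= i)%N then m i else 0))%N.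
Proof. by rewrite /tsum big_mkcond. Qed.
Ltac wt_tac r := rewrite mdegE tsumE /Defs.mweight /r /wt6 /= !big_ord_recl !big_ord0 /= /bump /=; lia.
Lemma wt1 m : mdeg m = 2%N -> Defs.mweight rho1 m = 2 - 6 * (tsum 5 m)%:Z.
Proof. wt_tac rho1. Qed.
Lemma wt2 m : mdeg m = 2%N -> Defs.mweight rho2 m = 2 - 3 * (tsum 4 m)%:Z.
Proof. wt_tac rho2. Qed.
Lemma wt3 m : mdeg m = 2%N -> Defs.mweight rho3 m = 2 - 2 * (tsum 3 m)%:Z.
Proof. wt_tac rho3. Qed.
Lemma wt4 m : mdeg m = 2%N -> Defs.mweight rho4 m = 4 - 3 * (tsum 2 m)%:Z.
Proof. wt_tac rho4. Qed.
Lemma wt5 m : mdeg m = 2%N -> Defs.mweight rho5 m = 10 - 6 * (tsum 1 m)%:Z.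
Proof. wt_tac rho5. Qed.


Section Pl.
Variable F : fieldType.

Lemma no_stable a (q : 'I_3 -> poly6 F) (b : 'I_3 -> int) :
  (forall i mm, mm \in msupp (q i) -> mdeg mm = 2%N -> Defs.mweight a mm <= b i) ->
  \sum_i b i <= 0 -> ~ stable_wrt a q.
Proof.
move=> Hb Hs [m [Hd [Hp Hw]]].
have [s Hs'] : exists s : 'S_3, forall i, (q i)@_(m (s i)) != 0.
  case: (boolP [exists s : 'S_3, [forall i, (q i)@_(m (s i)) != 0]]) => [/existsP [s /forallP H] | Hn]; first by exists s.
  exfalso; move: Hp; rewrite /plucker /determinant big1 ?eqxx // => s _.
  move/existsPn: Hn => /(_ s) /forallPn [i]; rewrite negbK => /eqP Hi.
  by rewrite (bigD1 i) //= mxE Hi mul0r mulr0.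
rewrite (reindex_inj (@perm_inj _ s)) /= in Hw.
have H : \sum_j Defs.mweight a (m (s j)) <= \sum_j b j.
  by apply: ler_sum => i _; apply: Hb; [rewrite mcoeff_msupp; exact: Hs' | exact: Hd].
by have := lt_le_trans Hw (le_trans H Hs); rewrite ltxx.
Qed.

Lemma stable_span a (p q : 'I_3 -> poly6 F) : (forall i, in_span3 q (p i)) -> stable_wrt a p -> stable_wrt a q.
Proof.
move=> Hs [m [Hd [Hp Hw]]]; exists m; split => //; split => //.
have /fin_all_exists [c Hc] := Hs.
have E : \matrix_(i < 3, j < 3) (p i)@_(m j) = \matrix_(i < 3, k < 3) c i k *m \matrix_(i < 3, j < 3) (q i)@_(m j).
  apply/matrixP => i j; rewrite !mxE Hc linear_sum; apply: eq_bigr => k _.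
  by rewrite !mxE; apply: mcoeffZ.
by move: Hp; rewrite /plucker E det_mulmx; apply: contraNneq => ->; rewrite mulr0.
Qed.

Lemma span_basis h (P Q : 'I_3 -> poly6 F) : same_net P Q ->
  forall i, in_span3 (fun i => in_basis h (Q i)) (in_basis h (P i)).
Proof.
move=> [_ H] i; have [c Hc] := H i; exists c; rewrite Hc /in_basis raddf_sum.
by apply: eq_bigr => k _; apply: comp_mpolyZ.
Qed.
End Pl.

Arguments ideal_lin {F k q}.
Arguments ideal_sq {F k q}.
Section Item.
Variable F : fieldType.
Lemma item a k (A D : int) (wt : forall m, mdeg m = 2%N -> Defs.mweight a m = A - D * (tsum k m)%:Z)
  (D0 : 0 <= D) (q : 'I_3 -> poly6 F) (l0 l1 l2 : nat) :
  (forall m, m \in msupp (q 0) -> (l0 <= tsum k m)%N) ->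
  (forall m, m \in msupp (q 1) -> (l1 <= tsum k m)%N) ->
  (forall m, m \in msupp (q 2) -> (l2 <= tsum k m)%N) ->
  \sum_(i < 3) (A - D * (nth 0%N [:: l0; l1; l2] i)%:Z) <= 0 -> ~ stable_wrt a q.
Proof.
move=> H0 H1 H2 Hs; apply: (@no_stable _ a q (fun i => A - D * (nth 0%N [:: l0; l1; l2] i)%:Z)) => //.
have B : forall (l : nat) mm, (l <= tsum k mm)%N -> mdeg mm = 2%N -> Defs.mweight a mm <= A - D * l%:Z.
  move=> l mm lt dm; rewrite wt // lerD2l lerN2 ler_wpM2l // lez_nat //.
move=> [[|[|[|//]]] Hi] mm Hm dm /=; apply: B => //.
- by apply: H0; have <- : Ordinal Hi = 0 by apply: val_inj.
- by apply: H1; have <- : Ordinal Hi = 1 by apply: val_inj.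
- by apply: H2; have <- : Ordinal Hi = 2 by apply: val_inj.
Qed.
End Item.

Theorem lemma2p1 (F : closedFieldType) (hF : [pchar F] =i pred0)
  (P : 'I_3 -> {mpoly F[6]}) (hP : net_basis P)
  (s1 : stable_type rho1 P) (s2 : stable_type rho2 P) (s3 : stable_type rho3 P)
  (s4 : stable_type rho4 P) (s5 : stable_type rho5 P)
  (h : 'M[F]_6) (hh : h \in unitmx)
  (Q : 'I_3 -> {mpoly F[6]}) (hQ : normalized_basis h P Q) :
  let q := fun i => in_basis h (Q i) in
  (* (1) *)
  (forall i, ~ in_ideal (gens_lin F 5) (q i)) /\
  (* (2) *)
  (~ (in_ideal (gens_lin F 4) (q 1) /\ in_ideal (gens_lin F 4) (q 2)) /\
   ~ in_ideal (gens_sq F 4) (q 2)) /\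
  (* (3) *)
  (~ (forall i, in_ideal (gens_lin F 3) (q i)) /\
   (~ (in_ideal (gens_lin F 3) (q 1) /\ in_ideal (gens_lin F 3) (q 2)) \/
    ~ in_ideal (gens_sq F 3) (q 2))) /\
  (* (4) *)
  (~ (in_ideal (gens_sq F 2) (q 1) /\ in_ideal (gens_sq F 2) (q 2)) /\
   (~ (forall i, in_ideal (gens_lin F 2) (q i)) \/
    ~ in_ideal (gens_sq F 2) (q 2))) /\
  (* (5) *)
  (~ (forall i, in_ideal (gens_lin F 1) (q i)) \/
   ~ (in_ideal (gens_sq F 1) (q 1) /\ in_ideal (gens_sq F 1) (q 2))).
Proof.
move=> q.
have Sp : forall i, in_span3 q (in_basis h (P i)) := @span_basis _ h P Q hQ.1.
have St : forall r, stable_type r P -> stable_wrt r q := fun r s => @stable_span _ r _ q Sp (s h hh).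
have Z : forall (i : 'I_3) m, m \in msupp (q i) -> (0 <= tsum 0 m)%N by [].
split.
  move=> [[|[|[|//]]] Hi] Hid.
  - have E : Ordinal Hi = 0 by apply: val_inj.
    rewrite E in Hid; apply: (@item _ rho1 5 2 6 wt1 _ q 1%N 0%N 0%N (ideal_lin Hid)) => //; last exact: St.
    by rewrite !big_ord_recl big_ord0 /=.
  - have E : Ordinal Hi = 1 by apply: val_inj.
    rewrite E in Hid; apply: (@item _ rho1 5 2 6 wt1 _ q 0%N 1%N 0%N _ (ideal_lin Hid)) => //; last exact: St.
    by rewrite !big_ord_recl big_ord0 /=.
  - have E : Ordinal Hi = 2 by apply: val_inj.
    rewrite E in Hid; apply: (@item _ rho1 5 2 6 wt1 _ q 0%N 0%N 1%N _ _ (ideal_lin Hid)) => //; last exact: St.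
    by rewrite !big_ord_recl big_ord0 /=.
split.
  split.
    move=> [H1 H2]; apply: (@item _ rho2 4 2 3 wt2 _ q 0%N 1%N 1%N _ (ideal_lin H1) (ideal_lin H2)) => //; last exact: St.
    by rewrite !big_ord_recl big_ord0 /=.
  move=> H2; apply: (@item _ rho2 4 2 3 wt2 _ q 0%N 0%N 2%N _ _ (ideal_sq H2)) => //; last exact: St.
  by rewrite !big_ord_recl big_ord0 /=.
split.
  split.
    move=> H; apply: (@item _ rho3 3 2 2 wt3 _ q 1%N 1%N 1%N (ideal_lin (H 0)) (ideal_lin (H 1)) (ideal_lin (H 2))) => //; last exact: St.
    by rewrite !big_ord_recl big_ord0 /=.
  case: (Classical_Prop.classic (in_ideal (gens_sq F 3) (q 2))) => H3; [left | by right].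
  move=> [H1 H2]; apply: (@item _ rho3 3 2 2 wt3 _ q 0%N 1%N 2%N _ (ideal_lin H1) (ideal_sq H3)) => //; last exact: St.
  by rewrite !big_ord_recl big_ord0 /=.
split.
  split.
    move=> [H1 H2]; apply: (@item _ rho4 2 4 3 wt4 _ q 0%N 2%N 2%N _ (ideal_sq H1) (ideal_sq H2)) => //; last exact: St.
    by rewrite !big_ord_recl big_ord0 /=.
  case: (Classical_Prop.classic (in_ideal (gens_sq F 2) (q 2))) => H3; [left | by right].
  move=> H; apply: (@item _ rho4 2 4 3 wt4 _ q 1%N 1%N 2%N (ideal_lin (H 0)) (ideal_lin (H 1)) (ideal_sq H3)) => //; last exact: St.
  by rewrite !big_ord_recl big_ord0 /=.
case: (Classical_Prop.classic (in_ideal (gens_sq F 1) (q 1) /\ in_ideal (gens_sq F 1) (q 2))) => [[H2 H3]|H]; [left | by right].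
move=> H; apply: (@item _ rho5 1 10 6 wt5 _ q 1%N 2%N 2%N (ideal_lin (H 0)) (ideal_sq H2) (ideal_sq H3)) => //; last exact: St.
by rewrite !big_ord_recl big_ord0 /=.
Qed.
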